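(* Every strengthened signature is representable: for every family $(H_o,\theta_o)_{o\in O}$ of strengthened arities, the category $\mathrm{Mon}^\Sigma$ of representations of the associated signature $\Sigma=(O,o\mapsto\tilde H_o)$ has an initial object.
   Context: Conventions: for endofunctors $F,G$ of ${\mathsf{Set}}$, $F\cdot G$ denotes $F\circ G$; whiskering is written $F\alpha$, $\alpha F$; $I$ is the identity functor. An endofunctor is $\omega$-cocontinuous if it preserves colimits of $\omega$-chains; $\mathrm{End}^\omega({\mathsf{Set}})$ is the category of such endofunctors. $\mathrm{End}^\omega_*({\mathsf{Set}})$ is the category of pointed $\omega$-cocontinuous endofunctors $(F,e)$, $e\colon I\to F$; pointed endofunctors compose as $(Z_1\cdot Z_2,e_1\cdot e_2)$ with horizontal composite. A strengthened arity is a pair $(H,\theta)$ where $H$ is an $\omega$-cocontinuous endofunctor of $\mathrm{End}^\omega({\mathsf{Set}})$ and $\theta$ is a natural transformation with components $\theta_{X,(Z,e)}\colon H(X)\cdot Z\to H(X\cdot Z)$, natural in $X$ and $(Z,e)$, such that $\theta_{X,(I,1_I)}=1_{H(X)}$ and $\theta_{X,(Z_1\cdot Z_2,e_1\cdot e_2)}=\theta_{X\cdot Z_1,(Z_2,e_2)}\circ(\theta_{X,(Z_1,e_1)}Z_2)$. A strengthened signature is a family of strengthened arities indexed by a set $O$. Modules: for a monad $R=(R,\mu,\eta)$ on ${\mathsf{Set}}$, an $R$-module is a functor $M\colon{\mathsf{Set}}\to{\mathsf{Set}}$ with $\rho^M\colon M\cdot R\to M$ satisfying $\rho^M\circ\rho^MR=\rho^M\circ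 M\mu$, $\rho^M\circ M\eta=1_M$; module morphisms are natural transformations commuting with actions; $R$ is an $R$-module via $\mu$. For a monad morphism $f\colon R\to S$ and $S$-module $N$, $f^*N$ is $N$ with $R$-action $\rho^N\circ Nf$; $f$ is an $R$-module morphism $R\to f^*S$. Arity associated to $(H,\theta)$: for an $\omega$-cocontinuous monad $R$, $\tilde H(R)$ is the $R$-module $H(R)$ with action $H(\mu)\circ\theta_{R,(R,\eta)}$; for a monad morphism $f\colon R\to S$, $\tilde H(f)=H(f)\colon H(R)\to f^*H(S)$. Representations: for a signature $\Sigma=(O,\alpha)$ (a family of such arities), a representation of $\Sigma$ in an $\omega$-cocontinuous monad $R$ is a family $r=(r_o)_{o\in O}$ of $R$-module morphisms $r_o\colon\alpha_o(R)\to R$. $\mathrm{Mon}^\Sigma$ has objects pairs $(R,r)$ with $R$ an $\omega$-cocontinuous monad on ${\mathsf{Set}}$ and $r$ a representation of $\Sigma$ in $R$; a morphism $(M,r)\to(N,s)$ is a monad morphism $m\colon M\to N$ such that $m\circ r_o=(m^*s_o)\circ\alpha_o(m)$ as $M$-module morphisms $\alpha_o(M)\to m^*N$, for every $o\in O$. A signature is representable if $\mathrm{Mon}^\Sigma$ has an initial object. *)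

(* Defs.v *)
(* plain Rocq. The category Set is modelled by Type and functions;
   equality of functions / natural transformations is pointwise. *)
From Stdlib Require Import FunctionalExtensionality.

Unset Implicit Arguments.


Record Functor := MkFunctor {
  fobj :> Type -> Type;
  fmap : forall (A B : Type), (A -> B) -> fobj A -> fobj B;
  fmap_id : forall (A : Type) (x : fobj A), fmap A A (fun a : A => a) x = x;
  fmap_comp : forall (A B C : Type) (f : A -> B) (g : B -> C) (x : fobj A),
      fmap A C (fun a => g (f a)) x = fmap B C g (fmap A B f x) }.
Arguments fmap _ {A B} _ _.
Arguments fmap_id _ {A} _.
Arguments fmap_comp _ {A B C} _ _ _.

Definition Id_F : Functor :=
  @MkFunctor (fun A => A) (fun A B f x => f x) (fun A x => eq_refl)
             (fun A B C f g x => eq_refl).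

Definition comp_F (F G : Functor) : Functor.
Proof.
  refine (@MkFunctor (fun A => F (G A)) (fun A B f x => fmap F (fmap G f) x) _ _).
  - intros A x.
    rewrite (functional_extensionality (fmap G (fun a : A => a)) (fun y => y)
               (fmap_id G (A:=A))).
    apply fmap_id.
  - intros A B C f g x.
    rewrite (functional_extensionality (fmap G (fun a => g (f a)))
               (fun y => fmap G g (fmap G f y)) (fmap_comp G f g)).
    apply fmap_comp.
Defined.

Record NatTrans (F G : Functor) := MkNT {
  nt :> forall A : Type, F A -> G A;
  nt_nat : forall (A B : Type) (f : A -> B) (x : F A),
      nt B (fmap F f x) = fmap G f (nt A x) }.
Arguments MkNT {F G} _ _.
Arguments nt {F G} _ _ _.
Arguments nt_nat {F G} _ {A B} _ _.

Definition nt_id (F : Functor) : NatTrans F F :=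
  @MkNT F F (fun A x => x) (fun A B f x => eq_refl).

Definition nt_comp {F G H : Functor} (b : NatTrans G H) (a : NatTrans F G)
  : NatTrans F H.
Proof.
  refine (@MkNT F H (fun A x => b A (a A x)) _).
  intros A B f x. rewrite (nt_nat a). apply nt_nat.
Defined.

Definition whiskR {F G : Functor} (a : NatTrans F G) (Z : Functor)
  : NatTrans (comp_F F Z) (comp_F G Z).
Proof.
  refine (@MkNT (comp_F F Z) (comp_F G Z) (fun A x => a (Z A) x) _).
  intros A B f x. exact (nt_nat a (fmap Z f) x).
Defined.

Definition whiskL (F : Functor) {Z Z' : Functor} (b : NatTrans Z Z')
  : NatTrans (comp_F F Z) (comp_F F Z').
Proof.
  refine (@MkNT (comp_F F Z) (comp_F F Z') (fun A x => fmap F (b A) x) _).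
  intros A B f x. simpl.
  rewrite <- !fmap_comp. f_equal.
  apply functional_extensionality. intro y. apply nt_nat.
Defined.

Definition rho_nt (F : Functor) : NatTrans (comp_F F Id_F) F :=
  @MkNT (comp_F F Id_F) F (fun A x => x) (fun A B f x => eq_refl).

Definition assoc_nt (F Z1 Z2 : Functor)
  : NatTrans (comp_F F (comp_F Z1 Z2)) (comp_F (comp_F F Z1) Z2) :=
  @MkNT (comp_F F (comp_F Z1 Z2)) (comp_F (comp_F F Z1) Z2)
        (fun A x => x) (fun A B f x => eq_refl).

Definition hcomp_pt {Z1 Z2 : Functor} (e1 : NatTrans Id_F Z1)
  (e2 : NatTrans Id_F Z2) : NatTrans Id_F (comp_F Z1 Z2).
Proof.
  refine (@MkNT Id_F (comp_F Z1 Z2) (fun A x => e1 (Z2 A) (e2 A x)) _).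
  intros A B f x.
  etransitivity.
  - exact (f_equal (e1 (Z2 B)) (nt_nat e2 f x)).
  - exact (nt_nat e1 (fmap Z2 f) (e2 A x)).
Defined.

Definition is_colim_Set (X : nat -> Type) (f : forall n, X n -> X (S n))
  (C : Type) (c : forall n, X n -> C) : Prop :=
  (forall n x, c (S n) (f n x) = c n x) /\
  forall (D : Type) (d : forall n, X n -> D),
    (forall n x, d (S n) (f n x) = d n x) ->
    exists u : C -> D,
      (forall n x, u (c n x) = d n x) /\
      forall u' : C -> D, (forall n x, u' (c n x) = d n x) -> forall y, u' y = u y.

Definition omega_cocont (F : Functor) : Prop :=
  forall X f C c, @is_colim_Set X f C c ->
    @is_colim_Set (fun n => F (X n)) (fun n => fmap F (f n))
                  (F C) (fun n => fmap F (c n)).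

Lemma Id_cocont : omega_cocont Id_F.
Proof. intros X f C c h. exact h. Qed.

Lemma comp_cocont {F G : Functor} :
  omega_cocont F -> omega_cocont G -> omega_cocont (comp_F F G).
Proof. intros hF hG X f C c h. exact (hF _ _ _ _ (hG _ _ _ _ h)). Qed.

Record EndW := MkEndW { ef :> Functor; ef_cocont : omega_cocont ef }.

Definition I_W : EndW := @MkEndW Id_F Id_cocont.
Definition comp_W (X Z : EndW) : EndW :=
  @MkEndW (comp_F X Z) (comp_cocont (ef_cocont X) (ef_cocont Z)).

Definition is_colim_End (X : nat -> EndW) (f : forall n, NatTrans (X n) (X (S n)))
  (C : EndW) (c : forall n, NatTrans (X n) C) : Prop :=
  (forall n A x, c (S n) A (f n A x) = c n A x) /\
  forall (D : EndW) (d : forall n, NatTrans (X n) D),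
    (forall n A x, d (S n) A (f n A x) = d n A x) ->
    exists u : NatTrans C D,
      (forall n A x, u A (c n A x) = d n A x) /\
      forall u' : NatTrans C D, (forall n A x, u' A (c n A x) = d n A x) ->
        forall A y, u' A y = u A y.

Record EndWFunctor := MkEWF {
  Hobj :> EndW -> EndW;
  Hmap : forall X Y : EndW, NatTrans X Y -> NatTrans (Hobj X) (Hobj Y);
  Hmap_id : forall (X : EndW) A x, Hmap X X (nt_id X) A x = x;
  Hmap_comp : forall (X Y Z : EndW) (a : NatTrans X Y) (b : NatTrans Y Z) A x,
      Hmap X Z (nt_comp b a) A x = Hmap Y Z b A (Hmap X Y a A x) }.
Arguments Hmap _ {X Y} _.

Definition omega_cocont_H (H : EndWFunctor) : Prop :=
  forall X f C c, @is_colim_End X f C c ->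
    @is_colim_End (fun n => H (X n)) (fun n => Hmap H (f n))
                  (H C) (fun n => Hmap H (c n)).

Record PtEnd := MkPt { pt :> EndW; pt_e : NatTrans I_W pt }.

Definition I_pt : PtEnd := @MkPt I_W (nt_id I_W).
Definition comp_pt (Z1 Z2 : PtEnd) : PtEnd :=
  @MkPt (comp_W Z1 Z2) (hcomp_pt (pt_e Z1) (pt_e Z2)).

Definition is_pt_mor {Z Z' : PtEnd} (b : NatTrans Z Z') : Prop :=
  forall A x, b A (pt_e Z A x) = pt_e Z' A x.

Record StrArity := MkSA {
  sa_H :> EndWFunctor;
  sa_cocont : omega_cocont_H sa_H;
  theta : forall (X : EndW) (Z : PtEnd),
      NatTrans (comp_W (sa_H X) Z) (sa_H (comp_W X Z));
  theta_nat_X : forall (X X' : EndW) (a : NatTrans X X') (Z : PtEnd) A x,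
      theta X' Z A (Hmap sa_H a (Z A) x)
      = @Hmap sa_H (comp_W X Z) (comp_W X' Z) (whiskR a Z) A (theta X Z A x);
  theta_nat_Z : forall (X : EndW) (Z Z' : PtEnd) (b : NatTrans Z Z'),
      @is_pt_mor Z Z' b -> forall A x,
      theta X Z' A (fmap (sa_H X) (b A) x)
      = @Hmap sa_H (comp_W X Z) (comp_W X Z') (whiskL X b) A (theta X Z A x);
  (* theta_{X,(I,1)} = 1  (up to the identity X.I = X) *)
  theta_id : forall (X : EndW) A x,
      @Hmap sa_H (comp_W X I_W) X (rho_nt X) A (theta X I_pt A x) = x;
  (* theta_{X, Z1.Z2} = theta_{X.Z1, Z2} o theta_{X,Z1} Z2
     (up to the identity X.(Z1.Z2) = (X.Z1).Z2) *)
  theta_comp : forall (X : EndW) (Z1 Z2 : PtEnd) A x,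
      @Hmap sa_H (comp_W X (comp_W Z1 Z2)) (comp_W (comp_W X Z1) Z2)
            (assoc_nt X Z1 Z2) A (theta X (comp_pt Z1 Z2) A x)
      = theta (comp_W X Z1) Z2 A (theta X Z1 (Z2 A) x) }.

Record Monad := MkMonad {
  mT :> EndW;
  m_eta : NatTrans I_W mT;
  m_mu : NatTrans (comp_W mT mT) mT;
  mu_assoc : forall A (x : mT (mT (mT A))),
      m_mu A (m_mu (mT A) x) = m_mu A (fmap mT (m_mu A) x);
  mu_eta_l : forall A (x : mT A), m_mu A (m_eta (mT A) x) = x;
  mu_eta_r : forall A (x : mT A), m_mu A (fmap mT (m_eta A) x) = x }.

Record MonadMor (R S : Monad) := MkMM {
  mm :> NatTrans R S;
  mm_eta : forall A x, mm A (m_eta R A x) = m_eta S A x;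
  mm_mu : forall A (x : R (R A)),
      mm A (m_mu R A x) = m_mu S A (fmap S (mm A) (mm (R A) x)) }.

Definition pt_of_monad (R : Monad) : PtEnd := @MkPt R (m_eta R).

Definition tilde_act (Hs : StrArity) (R : Monad)
  : NatTrans (comp_W (Hs R) R) (Hs R) :=
  nt_comp (@Hmap Hs (comp_W R R) R (m_mu R)) (theta Hs R (pt_of_monad R)).

(* a representation: a family of R-module morphisms  tilde H_o (R) -> R *)
Record Rep {O : Type} (Sig : O -> StrArity) (R : Monad) := MkRep {
  rep : forall o, NatTrans (Sig o R) R;
  rep_mod : forall o A x,
      rep o A (tilde_act (Sig o) R A x) = m_mu R A (rep o (R A) x) }.
Arguments rep {O Sig R} _ _.
Arguments rep_mod {O Sig R} _ _ _ _.

Definition is_rep_mor {O : Type} {Sig : O -> StrArity} {M N : Monad}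
  (r : Rep Sig M) (s : Rep Sig N) (m : MonadMor M N) : Prop :=
  forall o A x, m A (rep r o A x) = rep s o A (Hmap (Sig o) m A x).

Definition representable {O : Type} (Sig : O -> StrArity) : Prop :=
  exists (R : Monad) (r : Rep Sig R),
    forall (S : Monad) (s : Rep Sig S),
      exists m : MonadMor R S,
        is_rep_mor r s m /\
        forall m' : MonadMor R S, is_rep_mor r s m' -> forall A x, m' A x = m A x.

(* Main.v *)
Require Import Defs.
From Stdlib Require Import FunctionalExtensionality PropExtensionality ProofIrrelevance ClassicalEpsilon.

Lemma nt_ext {F G : Functor} (a b : NatTrans F G) :
  (forall A x, a A x = b A x) -> a = b.
Proof.
  destruct a as [a Ha], b as [b Hb]; simpl; intro H.
  assert (a = b) by (apply functional_extensionality_dep; intro A;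
                     apply functional_extensionality; intro x; apply H).
  subst b. f_equal. apply proof_irrelevance.
Qed.


Lemma Hmap_ext (H : EndWFunctor) {X Y : EndW} (a b : NatTrans X Y) :
  (forall A x, a A x = b A x) -> forall A x, Hmap H a A x = Hmap H b A x.
Proof. intros E A x. rewrite (nt_ext a b E). reflexivity. Qed.

Section Quot.
Context {X : Type} (R : X -> X -> Prop).
Inductive EqC : X -> X -> Prop :=
| eqc_base x y : R x y -> EqC x y
| eqc_refl x : EqC x x
| eqc_sym x y : EqC x y -> EqC y x
| eqc_trans x y z : EqC x y -> EqC y z -> EqC x z.
Definition Quo := {P : X -> Prop | exists a, P = EqC a}.
Definition cls (a : X) : Quo := exist _ (EqC a) (ex_intro _ a eq_refl).
Lemma cls_eq a b : EqC a b -> cls a = cls b.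
Proof.
  intro h. unfold cls.
  assert (E : EqC a = EqC b).
  { apply functional_extensionality; intro z; apply propositional_extensionality;
    split; intro k. - apply eqc_trans with a; auto using eqc_sym.
    - apply eqc_trans with b; auto. }
  revert h. generalize (ex_intro (fun a0 => EqC a = EqC a0) a eq_refl).
  generalize (ex_intro (fun a0 => EqC b = EqC a0) b eq_refl).
  rewrite E. intros e1 e2 _. f_equal. apply proof_irrelevance.
Qed.
Definition qrep (q : Quo) : X :=
  proj1_sig (constructive_indefinite_description _ (proj2_sig q)).
Lemma cls_qrep q : cls (qrep q) = q.
Proof.
  unfold qrep. destruct (constructive_indefinite_description _ _) as [a Ha]; simpl.
  destruct q as [P HP]; simpl in *. subst P. unfold cls. f_equal. apply proof_irrelevance.
Qed.
Lemma cls_surj q : exists a, cls a = q.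
Proof. exists (qrep q). apply cls_qrep. Qed.
Definition qlift {D : Type} (g : X -> D) (q : Quo) : D := g (qrep q).
Lemma qlift_cls {D : Type} (g : X -> D) (Hg : forall x y, R x y -> g x = g y) a :
  qlift g (cls a) = g a.
Proof.
  unfold qlift. remember (qrep (cls a)) as b.
  assert (E : cls b = cls a) by (subst b; apply cls_qrep).
  assert (h : EqC a b).
  { apply (f_equal (@proj1_sig _ _)) in E. simpl in E. rewrite <- E. apply eqc_refl. }
  clear Heqb E. symmetry. induction h. - apply Hg; assumption. - reflexivity. - symmetry; assumption. - congruence.
Qed.
End Quot.
Section Chain.
Variables (X : nat -> Type) (f : forall n, X n -> X (S n)).
Definition tot := {n : nat & X n}.
Definition stepR (p q : tot) : Prop :=
  exists n x, p = existT X (S n) (f n x) /\ q = existT X n x.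
Definition Colim := Quo stepR.
Definition cin n (x : X n) : Colim := cls stepR (existT X n x).
Lemma cin_compat n x : cin (S n) (f n x) = cin n x.
Proof. apply cls_eq, eqc_base. exists n, x. split; reflexivity. Qed.
Lemma cin_surj y : exists n x, cin n x = y.
Proof. destruct (cls_surj stepR y) as [[n x] E]. exists n, x. exact E. Qed.
Definition clift {D : Type} (d : forall n, X n -> D) : Colim -> D :=
  qlift stepR (fun p => d (projT1 p) (projT2 p)).
Lemma clift_cin {D : Type} (d : forall n, X n -> D)
  (Hd : forall n x, d (S n) (f n x) = d n x) n x : clift d (cin n x) = d n x.
Proof.
  unfold clift, cin. rewrite qlift_cls; [reflexivity|].
  intros p q [m [z [-> ->]]]. simpl. apply Hd.
Qed.
Lemma Colim_is_colim : is_colim_Set X f Colim cin.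
Proof.
  split; [exact cin_compat|].
  intros D d Hd. exists (clift d). split.
  - intros; apply clift_cin; auto.
  - intros u' Hu y. destruct (cin_surj y) as [n [x <-]]. rewrite Hu, clift_cin; auto.
Qed.
End Chain.
Arguments cin {X f} n x.

Lemma colim_surj {X f C c} : @is_colim_Set X f C c -> forall y, exists n x, c n x = y.
Proof.
  intros [Hc Hu] y.
  destruct (Hu Prop (fun _ _ => True) (fun _ _ => eq_refl)) as [u [Hu1 Hu2]].
  assert (E1 := Hu2 (fun y => exists n x, c n x = y)).
  assert (E2 := Hu2 (fun _ => True) (fun _ _ => eq_refl) y).
  rewrite E1, <- E2; [exact I|].
  intros n x. apply propositional_extensionality. split; [intros; exact I|].
  intros _. exists n, x. reflexivity.
Qed.

Lemma colim_ext {X f C c} (H : @is_colim_Set X f C c) {D : Type} (g h : C -> D) :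
  (forall n x, g (c n x) = h (c n x)) -> forall y, g y = h y.
Proof. intros E y. destruct (colim_surj H y) as [n [x <-]]. apply E. Qed.

Definition colim_lift {X f C c} (H : @is_colim_Set X f C c) {D : Type}
  (d : forall n, X n -> D) (Hd : forall n x, d (S n) (f n x) = d n x) : C -> D :=
  proj1_sig (constructive_indefinite_description _ (proj2 H D d Hd)).
Lemma colim_lift_beta {X f C c} (H : @is_colim_Set X f C c) {D : Type} d Hd n x :
  @colim_lift X f C c H D d Hd (c n x) = d n x.
Proof.
  unfold colim_lift. apply (proj1 (proj2_sig (constructive_indefinite_description _ (proj2 H D d Hd)))).
Qed.
Definition ZeroF : Functor :=
  @MkFunctor (fun _ => Empty_set) (fun A B h (x : Empty_set) => match x return Empty_set with end)
             (fun A (x : Empty_set) => match x with end) (fun A B C f g (x : Empty_set) => match x with end).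

Definition sumF (F G : Functor) : Functor.
Proof.
  refine (@MkFunctor (fun A => (F A + G A)%type)
    (fun A B h x => match x with inl a => inl (fmap F h a) | inr b => inr (fmap G h b) end) _ _).
  - intros A [a|b]; f_equal; apply fmap_id.
  - intros A B C f g [a|b]; f_equal; apply fmap_comp.
Defined.

Definition sigF {O : Type} (Fs : O -> Functor) : Functor.
Proof.
  refine (@MkFunctor (fun A => {o : O & Fs o A})
    (fun A B h x => match x with existT _ o y => existT _ o (fmap (Fs o) h y) end) _ _).
  - intros A [o y]; f_equal; apply fmap_id.
  - intros A B C f g [o y]; f_equal; apply fmap_comp.
Defined.

Lemma zero_cocont : omega_cocont ZeroF.
Proof.
  intros X f C c h. split; [intros n x; destruct x|].
  intros D d Hd. exists (fun e : Empty_set => match e with end). split; [intros n x; destruct x|].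
  intros u' _ y; destruct y.
Qed.

Lemma sum_cocont F G : omega_cocont F -> omega_cocont G -> omega_cocont (sumF F G).
Proof.
  intros hF hG X f C c h.
  pose proof (hF X f C c h) as cF. pose proof (hG X f C c h) as cG.
  split.
  - intros n [a|b]; simpl; f_equal; [apply (proj1 cF)|apply (proj1 cG)].
  - intros D d Hd.
    pose (uF := colim_lift cF (fun n y => d n (inl y)) (fun n y => Hd n (inl y))).
    pose (uG := colim_lift cG (fun n y => d n (inr y)) (fun n y => Hd n (inr y))).
    exists (fun s => match s with inl a => uF a | inr b => uG b end). split.
    + intros n [a|b]; simpl; [exact (colim_lift_beta cF _ _ n a)|exact (colim_lift_beta cG _ _ n b)].
    + intros u' Hu [a|b].
      * apply (colim_ext cF (fun a => u' (inl a)) uF). intros n x.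
        transitivity (d n (inl x)); [apply (Hu n (inl x))|symmetry; exact (colim_lift_beta cF _ _ n x)].
      * apply (colim_ext cG (fun a => u' (inr a)) uG). intros n x.
        transitivity (d n (inr x)); [apply (Hu n (inr x))|symmetry; exact (colim_lift_beta cG _ _ n x)].
Qed.

Lemma sig_cocont {O : Type} (Fs : O -> Functor) :
  (forall o, omega_cocont (Fs o)) -> omega_cocont (sigF Fs).
Proof.
  intros hF X f C c h.
  pose proof (fun o => hF o X f C c h) as cF.
  split.
  - intros n [o y]; simpl; f_equal; apply (proj1 (cF o)).
  - intros D d Hd.
    pose (u := fun o => colim_lift (cF o) (fun n y => d n (existT _ o y))
                                    (fun n y => Hd n (existT _ o y))).
    exists (fun s => match s with existT _ o y => u o y end). split.
    + intros n [o y]; simpl; exact (colim_lift_beta (cF o) _ _ n y).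
    + intros u' Hu [o y].
      apply (colim_ext (cF o) (fun a => u' (existT _ o a)) (u o)). intros n x.
      transitivity (d n (existT _ o x)); [apply (Hu n (existT _ o x))|symmetry; exact (colim_lift_beta (cF o) _ _ n x)].
Qed.

Section ColimF.
Variables (Xf : nat -> Functor) (fn : forall n, NatTrans (Xf n) (Xf (S n))).

Definition KA (A : Type) := Colim (fun n => Xf n A) (fun n => fn n A).

Lemma Kmap_compat A B (h : A -> B) n (x : Xf n A) :
  cin (f:=fun n => fn n B) (S n) (fmap (Xf (S n)) h (fn n A x))
  = cin (f:=fun n => fn n B) n (fmap (Xf n) h x).
Proof. rewrite <- nt_nat. exact (cin_compat (fun n => Xf n B) (fun n => fn n B) n _). Qed.

Definition Kmap A B (h : A -> B) : KA A -> KA B :=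
  clift _ _ (fun n x => cin (f:=fun n => fn n B) n (fmap (Xf n) h x)).

Lemma Kmap_cin A B (h : A -> B) n x :
  Kmap A B h (cin n x) = cin n (fmap (Xf n) h x).
Proof. unfold Kmap. rewrite clift_cin; [reflexivity|]. apply Kmap_compat. Qed.

Definition KF : Functor.
Proof.
  refine (@MkFunctor KA Kmap _ _).
  - intros A y. destruct (cin_surj _ _ y) as [n [x <-]]. rewrite Kmap_cin, fmap_id. reflexivity.
  - intros A B C g h y. destruct (cin_surj _ _ y) as [n [x <-]].
    rewrite !Kmap_cin, fmap_comp. reflexivity.
Defined.

Definition Kin n : NatTrans (Xf n) KF.
Proof.
  refine (@MkNT (Xf n) KF (fun A x => cin n x) _).
  intros A B h x. simpl. symmetry. apply Kmap_cin.
Defined.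

Lemma KF_cocont : (forall n, omega_cocont (Xf n)) -> omega_cocont KF.
Proof.
  intros hX Y g Yc cy hY.
  pose proof (fun n => hX n Y g Yc cy hY) as cX.
  split.
  - intros k z. cbv beta. rewrite <- (fmap_comp KF).
    f_equal. apply functional_extensionality. intro a. apply (proj1 hY).
  - intros D d Hd.
    assert (Hn : forall n k (z : Xf n (Y k)),
       d (S k) (cin n (fmap (Xf n) (g k) z)) = d k (cin n z)).
    { intros n k z. rewrite <- (Hd k (cin n z)). f_equal. exact (eq_sym (Kmap_cin _ _ (g k) n z)). }
    pose (u := fun n => colim_lift (cX n) (fun k z => d k (cin n z)) (Hn n)).
    assert (Hu : forall n (x : Xf n Yc), u (S n) (fn n Yc x) = u n x).
    { intros n. apply (colim_ext (cX n) (fun x => u (S n) (fn n Yc x)) (u n)).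
      intros k z. simpl. rewrite (nt_nat (fn n) (cy k) z). unfold u.
      transitivity (d k (cin (S n) (fn n (Y k) z))).
      { exact (colim_lift_beta (cX (S n)) _ _ k _). }
      transitivity (d k (cin n z)).
      { f_equal. exact (cin_compat _ _ n z). }
      symmetry. exact (colim_lift_beta (cX n) _ _ k z). }
    exists (clift _ _ u). split.
    + intros k w. destruct (cin_surj _ _ w) as [n [z <-]]. simpl.
      rewrite Kmap_cin, clift_cin; [|exact Hu]. exact (colim_lift_beta (cX n) _ _ k z).
    + intros u' Hu' y. destruct (cin_surj _ _ y) as [n [x <-]].
      rewrite clift_cin; [|exact Hu].
      destruct (colim_surj (cX n) x) as [k [z <-]].
      transitivity (d k (cin n z)).
      { rewrite <- (Hu' k (cin n z)). f_equal. symmetry. exact (Kmap_cin _ _ (cy k) n z). }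
      symmetry. exact (colim_lift_beta (cX n) _ _ k z).
Qed.
End ColimF.
Section ColimW.
Variables (Xw : nat -> EndW) (fw : forall n, NatTrans (Xw n) (Xw (S n))).
Definition KW : EndW :=
  MkEndW (KF (fun n => ef (Xw n)) fw) (KF_cocont _ _ (fun n => ef_cocont (Xw n))).
Definition KWin n : NatTrans (Xw n) KW := Kin (fun n => ef (Xw n)) fw n.
Lemma KW_colim : is_colim_End Xw fw KW KWin.
Proof.
  split.
  - intros n A x. exact (cin_compat _ _ n x).
  - intros D d Hd.
    pose (u := fun A => clift _ _ (fun n x => d n A x) : KW A -> D A).
    assert (Hu : forall A n x, u A (cin n x) = d n A x)
      by (intros; apply clift_cin; intros; apply Hd).
    unshelve eexists (MkNT u _).
    + intros A B h y. destruct (cin_surj _ _ y) as [n [x <-]].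
      change (u B (Kmap _ fw A B h (cin n x)) = fmap D h (u A (cin n x))).
      rewrite Kmap_cin, !Hu. apply nt_nat.
    + split; [intros; apply Hu|].
      intros u' Hu' A y. destruct (cin_surj _ _ y) as [n [x <-]]. simpl.
      rewrite Hu. apply Hu'.
Qed.
End ColimW.

Lemma colim_End_pointwise X f C c : is_colim_End X f C c ->
  forall A, is_colim_Set (fun n => X n A) (fun n => f n A) (C A) (fun n => c n A).
Proof.
  intros H A.
  destruct (proj2 H (KW X f) (KWin X f) (proj1 (KW_colim X f))) as [u [Hu _]].
  destruct (proj2 (KW_colim X f) C c (proj1 H)) as [v [Hv _]].
  assert (vu : forall A y, v A (u A y) = y).
  { destruct (proj2 H C c (proj1 H)) as [w [_ Hw]].
    intros B y. change (nt_comp v u B y = nt_id C B y).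
    rewrite (Hw (nt_comp v u)), (Hw (nt_id C)); try reflexivity.
    all: intros; simpl; try rewrite Hu; try apply Hv; reflexivity. }
  pose proof (Colim_is_colim (fun n => X n A) (fun n => f n A)) as K.
  split; [intros; apply (proj1 H)|].
  intros D d Hd.
  exists (fun y => colim_lift K d Hd (u A y)). split.
  - intros n x. rewrite Hu. exact (colim_lift_beta K d Hd n x).
  - intros u' Hu' y. rewrite <- (vu A y).
    destruct (cin_surj _ _ (u A y)) as [n [x E]]. rewrite <- E.
    transitivity (d n x).
    + rewrite <- Hu'. f_equal. exact (Hv n A x).
    + rewrite <- (colim_lift_beta K d Hd n x). f_equal. transitivity (u A (c n A x)). { exact (eq_sym (Hu n A x)). } f_equal. symmetry. exact (Hv n A x).
Qed.
Lemma Hmap_comp_ext (H : EndWFunctor) {X Y Z : EndW} (a : NatTrans X Y) (b : NatTrans Y Z)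
  (c : NatTrans X Z) : (forall A x, b A (a A x) = c A x) ->
  forall A x, Hmap H b A (Hmap H a A x) = Hmap H c A x.
Proof. intros E A x. rewrite <- Hmap_comp. apply Hmap_ext. exact E. Qed.

Definition ZeroW : EndW := MkEndW ZeroF zero_cocont.
Definition zero_nt (G : Functor) : NatTrans ZeroF G :=
  @MkNT ZeroF G (fun A (x : Empty_set) => match x with end)
        (fun A B h (x : Empty_set) => match x with end).

Section Main.
Variables (O : Type) (Sig : O -> StrArity).

Definition FW (X : EndW) : EndW :=
  MkEndW (sumF Id_F (sigF (fun o => ef (Sig o X))))
         (sum_cocont _ _ Id_cocont (sig_cocont _ (fun o => ef_cocont (Sig o X)))).

Definition FWmap {X Y : EndW} (a : NatTrans X Y) : NatTrans (FW X) (FW Y).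
Proof.
  refine (@MkNT (FW X) (FW Y)
    (fun A (s : (A + {o : O & Sig o X A})%type) =>
       match s return (A + {o : O & Sig o Y A})%type with
       | inl x => inl x
       | inr (existT _ o y) => inr (existT _ o (Hmap (Sig o) a A y)) end) _).
  intros A B h [x|[o y]]; simpl; [reflexivity|].
  do 2 f_equal. apply nt_nat.
Defined.

Fixpoint Xc (n : nat) : EndW := match n with 0 => ZeroW | S n => FW (Xc n) end.
Fixpoint ic (n : nat) : NatTrans (Xc n) (Xc (S n)) :=
  match n return NatTrans (Xc n) (Xc (S n)) with
  | 0 => zero_nt (FW ZeroW)
  | S n => FWmap (ic n) end.

Definition T : EndW := KW Xc ic.
Definition cT n : NatTrans (Xc n) T := KWin Xc ic n.
Definition Tcol : is_colim_End Xc ic T cT := KW_colim Xc ic.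

Definition Tin {A : Type} (n : nat) (x : Xc n A) : T A := cin (f := fun n => ic n A) n x.

Lemma Tin_compat A n (x : Xc n A) : Tin (S n) (ic n A x) = Tin n x.
Proof. exact (cin_compat _ _ n x). Qed.
Lemma Tin_surj A (y : T A) : exists n x, Tin n x = y.
Proof. exact (cin_surj _ _ y). Qed.
Lemma fmapT_Tin A B (h : A -> B) n x : fmap T h (Tin n x) = Tin n (fmap (Xc n) h x).
Proof. exact (Kmap_cin _ _ _ _ h n x). Qed.

Lemma Tin_inl A n (a : A) : Tin (A:=A) (S n) (inl a) = Tin 1 (inl a).
Proof.
  induction n; [reflexivity|].
  rewrite <- IHn. exact (Tin_compat A (S n) (inl a)).
Qed.

Definition Hcol o := sa_cocont (Sig o) _ _ _ _ Tcol.

Definition taud o n : NatTrans (Sig o (Xc n)) T.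
Proof.
  refine (@MkNT (Sig o (Xc n)) T (fun A y => Tin (S n) (inr (existT _ o y))) _).
  intros A B h y. simpl. symmetry. exact (fmapT_Tin A B h (S n) (inr (existT _ o y))).
Defined.

Lemma taud_compat o : forall n A x,
  taud o (S n) A (Hmap (Sig o) (ic n) A x) = taud o n A x.
Proof. intros n A x. exact (Tin_compat A (S n) (inr (existT _ o x))). Qed.

Definition tau o : NatTrans (Sig o T) T :=
  proj1_sig (constructive_indefinite_description _
    (proj2 (Hcol o) T (taud o) (taud_compat o))).

Lemma tau_beta o n A y : tau o A (Hmap (Sig o) (cT n) A y) = Tin (S n) (inr (existT _ o y)).
Proof.
  unfold tau. exact (proj1 (proj2_sig (constructive_indefinite_description _
    (proj2 (Hcol o) T (taud o) (taud_compat o)))) n A y).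
Qed.

Lemma HT_surj o A (w : Sig o T A) : exists n y, Hmap (Sig o) (cT n) A y = w.
Proof. exact (colim_surj (colim_End_pointwise _ _ _ _ (Hcol o) A) w). Qed.

Definition eta : NatTrans I_W T.
Proof.
  refine (@MkNT I_W T (fun A a => Tin 1 (inl a)) _).
  intros A B h a. symmetry. exact (fmapT_Tin A B h 1 (inl a)).
Defined.

Definition ptT : PtEnd := MkPt T eta.

Definition sig_step n (s : NatTrans (comp_W (Xc n) T) T) : NatTrans (comp_W (Xc (S n)) T) T.
Proof.
  refine (@MkNT (comp_W (Xc (S n)) T) T
    (fun A (x : (T A + {o : O & Sig o (Xc n) (T A)})%type) =>
       match x with
       | inl t => t
       | inr (existT _ o y) =>
           tau o A (Hmap (Sig o) s A (theta (Sig o) (Xc n) ptT A y)) end) _).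
  intros A B h [t|[o y]]; [reflexivity|].
  change (tau o B (Hmap (Sig o) s B (theta (Sig o) (Xc n) ptT B
            (fmap (comp_W (Sig o (Xc n)) ptT) h y)))
    = fmap T h (tau o A (Hmap (Sig o) s A (theta (Sig o) (Xc n) ptT A y)))).
  rewrite (nt_nat (theta (Sig o) (Xc n) ptT) h y).
  rewrite (nt_nat (Hmap (Sig o) s) h). apply (nt_nat (tau o) h).
Defined.

Fixpoint sig n : NatTrans (comp_W (Xc n) T) T :=
  match n return NatTrans (comp_W (Xc n) T) T with
  | 0 => @MkNT (comp_W (Xc 0) T) T (fun A (x : Empty_set) => match x with end)
              (fun A B h (x : Empty_set) => match x with end)
  | S n => sig_step n (sig n) end.

Lemma sig_compat n : forall A x, sig (S n) A (ic n (T A) x) = sig n A x.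
Proof.
  induction n; intros A x; [destruct x|].
  destruct x as [t|[o y]]; [reflexivity|].
  change (tau o A (Hmap (Sig o) (sig (S n)) A
            (theta (Sig o) (Xc (S n)) ptT A (Hmap (Sig o) (ic n) (ptT A) y)))
          = tau o A (Hmap (Sig o) (sig n) A (theta (Sig o) (Xc n) ptT A y))).
  f_equal.
  rewrite (theta_nat_X (Sig o) (Xc n) (Xc (S n)) (ic n) ptT A y).
  apply Hmap_comp_ext. intros B z. apply IHn.
Qed.

Definition mu_c A : T (T A) -> T A :=
  clift _ _ (fun n (x : Xc n (T A)) => sig n A x).

Lemma mu_Tin A n x : mu_c A (Tin n x) = sig n A x.
Proof. unfold mu_c, Tin. rewrite clift_cin; [reflexivity|]. intros; apply sig_compat. Qed.

Definition mu : NatTrans (comp_W T T) T.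
Proof.
  refine (@MkNT (comp_W T T) T mu_c _).
  intros A B h y. destruct (Tin_surj _ y) as [n [x <-]].
  change (mu_c B (fmap T (fmap T h) (Tin n x)) = fmap T h (mu_c A (Tin n x))).
  rewrite fmapT_Tin, !mu_Tin. apply (nt_nat (sig n)).
Defined.

Lemma mu_eta_l' A (t : T A) : mu A (eta (T A) t) = t.
Proof. exact (mu_Tin A 1 (inl t)). Qed.

Lemma sig_eta n : forall A x, sig n A (fmap (Xc n) (eta A) x) = Tin n x.
Proof.
  induction n; intros A x; [destruct x|].
  destruct x as [a|[o y]].
  - simpl. symmetry. apply Tin_inl.
  - change (tau o A (Hmap (Sig o) (sig n) A
              (theta (Sig o) (Xc n) ptT A (fmap (Sig o (Xc n)) (eta A) y)))
            = Tin (S n) (inr (existT _ o y))).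
    assert (E : theta (Sig o) (Xc n) ptT A (fmap (Sig o (Xc n)) (eta A) y)
      = @Hmap (Sig o) (comp_W (Xc n) I_pt) (comp_W (Xc n) ptT) (whiskL (Xc n) eta) A
           (theta (Sig o) (Xc n) I_pt A y))
      by exact (theta_nat_Z (Sig o) (Xc n) I_pt ptT eta (fun _ _ => eq_refl) A y).
    rewrite E; clear E.
    transitivity (tau o A (Hmap (Sig o) (cT n) A y)); [|apply tau_beta]. f_equal.
    transitivity (@Hmap (Sig o) (Xc n) T (cT n) A
       (@Hmap (Sig o) (comp_W (Xc n) I_W) (Xc n) (rho_nt (Xc n)) A (theta (Sig o) (Xc n) I_pt A y))).
    2: { rewrite (theta_id (Sig o) (Xc n) A y). reflexivity. }
    pose (c := @nt_comp (comp_W (Xc n) I_W) (Xc n) T (cT n) (rho_nt (Xc n))).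
    assert (E1 := @Hmap_comp_ext (Sig o) (comp_W (Xc n) I_W) (comp_W (Xc n) T) T
                    (whiskL (Xc n) eta) (sig n) c (fun B z => IHn B z) A
                    (theta (Sig o) (Xc n) I_pt A y)).
    assert (E2 := @Hmap_comp_ext (Sig o) (comp_W (Xc n) I_W) (Xc n) T
                    (rho_nt (Xc n)) (cT n) c (fun B z => eq_refl) A
                    (theta (Sig o) (Xc n) I_pt A y)).
    exact (eq_trans E1 (eq_sym E2)).
Qed.

Lemma mu_eta_r' A (t : T A) : mu A (fmap T (eta A) t) = t.
Proof.
  destruct (Tin_surj _ t) as [n [x <-]].
  change (mu_c A (fmap T (eta A) (Tin n x)) = Tin n x).
  rewrite fmapT_Tin, mu_Tin. apply sig_eta.
Qed.
Lemma mu_Tin' A n x : mu A (Tin n x) = sig n A x.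
Proof. exact (mu_Tin A n x). Qed.

Lemma mu_tau o A (w : Sig o T (T A)) :
  mu A (tau o (T A) w)
  = tau o A (Hmap (Sig o) mu A (theta (Sig o) T ptT A w)).
Proof.
  destruct (HT_surj o (T A) w) as [n [y <-]].
  rewrite tau_beta.
  rewrite mu_Tin'.
  change (tau o A (Hmap (Sig o) (sig n) A (theta (Sig o) (Xc n) ptT A y)) =
     tau o A (Hmap (Sig o) mu A (theta (Sig o) T ptT A (Hmap (Sig o) (cT n) (T A) y)))).
  f_equal.
  assert (E : theta (Sig o) T ptT A (Hmap (Sig o) (cT n) (ptT A) y)
     = @Hmap (Sig o) (comp_W (Xc n) ptT) (comp_W T ptT) (whiskR (cT n) ptT) A
          (theta (Sig o) (Xc n) ptT A y))
    by exact (theta_nat_X (Sig o) (Xc n) T (cT n) ptT A y).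
  change (Hmap (Sig o) (sig n) A (theta (Sig o) (Xc n) ptT A y) =
          Hmap (Sig o) mu A (theta (Sig o) T ptT A (Hmap (Sig o) (cT n) (ptT A) y))).
  rewrite E. symmetry. apply Hmap_comp_ext. intros B z. apply mu_Tin.
Qed.

Lemma sig_mu n : forall A z, mu A (sig n (T A) z) = sig n A (fmap (Xc n) (mu A) z).
Proof.
  induction n; intros A z; [destruct z|].
  destruct z as [t|[o y]]; [reflexivity|].
  change (mu A (tau o (T A) (Hmap (Sig o) (sig n) (T A) (theta (Sig o) (Xc n) ptT (T A) y)))
     = tau o A (Hmap (Sig o) (sig n) A
          (theta (Sig o) (Xc n) ptT A (fmap (Sig o (Xc n)) (mu A) y)))).
  rewrite mu_tau. f_equal.
  assert (E1 : theta (Sig o) T ptT A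
                 (Hmap (Sig o) (sig n) (ptT A) (theta (Sig o) (Xc n) ptT (ptT A) y))
     = @Hmap (Sig o) (comp_W (comp_W (Xc n) ptT) ptT) (comp_W T ptT) (whiskR (sig n) ptT) A
          (theta (Sig o) (comp_W (Xc n) ptT) ptT A (theta (Sig o) (Xc n) ptT (ptT A) y)))
    by exact (theta_nat_X (Sig o) (comp_W (Xc n) T) T (sig n) ptT A _).
  change (Hmap (Sig o) mu A (theta (Sig o) T ptT A
                 (Hmap (Sig o) (sig n) (ptT A) (theta (Sig o) (Xc n) ptT (ptT A) y))) =
          Hmap (Sig o) (sig n) A
            (theta (Sig o) (Xc n) ptT A (fmap (Sig o (Xc n)) (mu A) y))).
  rewrite E1.
  rewrite <- (theta_comp (Sig o) (Xc n) ptT ptT A y).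
  assert (ptm : is_pt_mor (Z := comp_pt ptT ptT) (Z' := ptT) mu)
    by (intros B x; apply mu_eta_l').
  assert (E2 : theta (Sig o) (Xc n) ptT A (fmap (Sig o (Xc n)) (mu A) y)
     = @Hmap (Sig o) (comp_W (Xc n) (comp_pt ptT ptT)) (comp_W (Xc n) ptT) (whiskL (Xc n) mu) A
          (theta (Sig o) (Xc n) (comp_pt ptT ptT) A y))
    by exact (theta_nat_Z (Sig o) (Xc n) (comp_pt ptT ptT) ptT mu ptm A y).
  rewrite E2.
  set (v := theta (Sig o) (Xc n) (comp_pt ptT ptT) A y).
  pose (c := @nt_comp (comp_W (Xc n) (comp_pt ptT ptT)) (comp_W (Xc n) ptT) T
               (sig n) (whiskL (Xc n) mu)).
  assert (E3 := @Hmap_comp_ext (Sig o) (comp_W (Xc n) (comp_pt ptT ptT)) (comp_W (Xc n) ptT) T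
                  (whiskL (Xc n) mu) (sig n) c (fun B z => eq_refl) A v).
  refine (eq_trans _ (eq_sym E3)).
  pose (c2 := @nt_comp (comp_W (Xc n) (comp_pt ptT ptT)) (comp_W (comp_W (Xc n) ptT) ptT) (comp_W T ptT)
               (whiskR (sig n) ptT) (assoc_nt (Xc n) ptT ptT)).
  assert (E4 := @Hmap_comp_ext (Sig o) (comp_W (Xc n) (comp_pt ptT ptT))
                  (comp_W (comp_W (Xc n) ptT) ptT) (comp_W T ptT)
                  (assoc_nt (Xc n) ptT ptT) (whiskR (sig n) ptT) c2 (fun B z => eq_refl) A v).
  refine (eq_trans (f_equal (Hmap (Sig o) mu A) E4) _).
  apply Hmap_comp_ext. intros B z. simpl. apply IHn.
Qed.

Lemma mu_assoc' A (x : T (T (T A))) : mu A (mu (T A) x) = mu A (fmap T (mu A) x).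
Proof.
  destruct (Tin_surj _ x) as [n [z <-]].
  change (mu A (mu_c (T A) (Tin n z)) = mu_c A (fmap T (mu A) (Tin n z))).
  rewrite fmapT_Tin, !mu_Tin. apply sig_mu.
Qed.

Definition Tm : Monad := MkMonad T eta mu mu_assoc' mu_eta_l' mu_eta_r'.

Definition Trep : Rep Sig Tm.
Proof.
  refine (MkRep O Sig Tm tau _).
  intros o A x. simpl. symmetry. apply mu_tau.
Defined.
Section Init.
Variables (Sm : Monad) (s : Rep Sig Sm).

Definition mn_step n (a : NatTrans (Xc n) Sm) : NatTrans (Xc (S n)) Sm.
Proof.
  refine (@MkNT (Xc (S n)) Sm
    (fun A (x : (A + {o : O & Sig o (Xc n) A})%type) =>
       match x with
       | inl b => m_eta Sm A b
       | inr (existT _ o y) => rep s o A (Hmap (Sig o) a A y) end) _).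
  intros A B h [b|[o y]].
  - exact (nt_nat (m_eta Sm) h b).
  - change (rep s o B (Hmap (Sig o) a B (fmap (Sig o (Xc n)) h y))
            = fmap Sm h (rep s o A (Hmap (Sig o) a A y))).
    rewrite (nt_nat (Hmap (Sig o) a) h). apply (nt_nat (rep s o) h).
Defined.

Fixpoint mn n : NatTrans (Xc n) Sm :=
  match n return NatTrans (Xc n) Sm with
  | 0 => zero_nt Sm
  | S n => mn_step n (mn n) end.

Lemma mn_compat n : forall A x, mn (S n) A (ic n A x) = mn n A x.
Proof.
  induction n; intros A x; [destruct x|].
  destruct x as [b|[o y]]; [reflexivity|].
  change (rep s o A (Hmap (Sig o) (mn (S n)) A (Hmap (Sig o) (ic n) A y))
          = rep s o A (Hmap (Sig o) (mn n) A y)).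
  f_equal. apply Hmap_comp_ext. apply IHn.
Qed.

Definition m_c A : T A -> Sm A := clift _ _ (fun n (x : Xc n A) => mn n A x).
Lemma m_Tin A n x : m_c A (Tin n x) = mn n A x.
Proof. unfold m_c, Tin. rewrite clift_cin; [reflexivity|]. intros; apply mn_compat. Qed.

Definition mnt : NatTrans T Sm.
Proof.
  refine (@MkNT T Sm m_c _).
  intros A B h y. destruct (Tin_surj _ y) as [n [x <-]].
  change (m_c B (fmap T h (Tin n x)) = fmap Sm h (m_c A (Tin n x))).
  rewrite fmapT_Tin, !m_Tin. apply (nt_nat (mn n)).
Defined.
Lemma m_Tin' A n x : mnt A (Tin n x) = mn n A x.
Proof. exact (m_Tin A n x). Qed.

Lemma m_tau o A (w : Sig o T A) : mnt A (tau o A w) = rep s o A (Hmap (Sig o) mnt A w).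
Proof.
  destruct (HT_surj o A w) as [n [y <-]].
  rewrite tau_beta, m_Tin'.
  change (rep s o A (Hmap (Sig o) (mn n) A y)
          = rep s o A (Hmap (Sig o) mnt A (Hmap (Sig o) (cT n) A y))).
  f_equal. symmetry. apply Hmap_comp_ext. intros B z. apply m_Tin'.
Qed.

Lemma m_eta' A x : mnt A (eta A x) = m_eta Sm A x.
Proof. exact (m_Tin A 1 (inl x)). Qed.

Lemma m_sig n : forall A x,
  mnt A (sig n A x) = m_mu Sm A (fmap Sm (mnt A) (mn n (T A) x)).
Proof.
  induction n; intros A x; [destruct x|].
  destruct x as [t|[o y]].
  - change (mnt A t = m_mu Sm A (fmap Sm (mnt A) (m_eta Sm (T A) t))).
    rewrite <- (nt_nat (m_eta Sm) (mnt A) t). symmetry. apply mu_eta_l.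
  - change (mnt A (tau o A (Hmap (Sig o) (sig n) A (theta (Sig o) (Xc n) ptT A y)))
        = m_mu Sm A (fmap Sm (mnt A) (rep s o (T A) (Hmap (Sig o) (mn n) (T A) y)))).
    rewrite m_tau.
    rewrite <- (nt_nat (rep s o) (mnt A)).
    rewrite <- (rep_mod s o A).
    assert (ptm : is_pt_mor (Z := ptT) (Z' := pt_of_monad Sm) mnt)
      by (intros B z; apply m_eta').
    assert (E1 : theta (Sig o) Sm (pt_of_monad Sm) A
                   (fmap (Sig o Sm) (mnt A) (Hmap (Sig o) (mn n) (T A) y))
        = @Hmap (Sig o) (comp_W Sm ptT) (comp_W Sm (pt_of_monad Sm)) (whiskL Sm mnt) A
             (theta (Sig o) Sm ptT A (Hmap (Sig o) (mn n) (T A) y)))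
      by exact (theta_nat_Z (Sig o) Sm ptT (pt_of_monad Sm) mnt ptm A _).
    assert (E2 : theta (Sig o) Sm ptT A (Hmap (Sig o) (mn n) (ptT A) y)
        = @Hmap (Sig o) (comp_W (Xc n) ptT) (comp_W Sm ptT) (whiskR (mn n) ptT) A
             (theta (Sig o) (Xc n) ptT A y))
      by exact (theta_nat_X (Sig o) (Xc n) Sm (mn n) ptT A y).
    change (rep s o A (Hmap (Sig o) mnt A (Hmap (Sig o) (sig n) A (theta (Sig o) (Xc n) ptT A y)))
      = rep s o A (Hmap (Sig o) (m_mu Sm) A (theta (Sig o) Sm (pt_of_monad Sm) A
                   (fmap (Sig o Sm) (mnt A) (Hmap (Sig o) (mn n) (T A) y))))).
    f_equal.
    rewrite E1. change (Hmap (Sig o) (mn n) (T A) y) with (Hmap (Sig o) (mn n) (ptT A) y).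
    rewrite E2.
    set (v := theta (Sig o) (Xc n) ptT A y).
    pose (c := @nt_comp (comp_W (Xc n) ptT) T Sm mnt (sig n)).
    refine (eq_trans (Hmap_comp_ext (Sig o) (sig n) mnt c (fun B z => eq_refl) A v) _).
    pose (c2 := @nt_comp (comp_W (Xc n) ptT) (comp_W Sm ptT) (comp_W Sm (pt_of_monad Sm))
                   (whiskL Sm mnt) (whiskR (mn n) ptT)).
    refine (eq_trans _ (f_equal (Hmap (Sig o) (m_mu Sm) A)
               (eq_sym (@Hmap_comp_ext (Sig o) (comp_W (Xc n) ptT) (comp_W Sm ptT) (comp_W Sm (pt_of_monad Sm)) (whiskR (mn n) ptT) (whiskL Sm mnt) c2
                    (fun B z => eq_refl) A v)))).
    symmetry. apply Hmap_comp_ext. intros B z. simpl. symmetry. apply IHn.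
Qed.

Definition mT : MonadMor Tm Sm.
Proof.
  refine (MkMM Tm Sm mnt m_eta' _).
  intros A z. destruct (Tin_surj _ z) as [n [x <-]].
  change (mnt A (mu A (Tin n x)) = m_mu Sm A (fmap Sm (mnt A) (mnt (T A) (Tin n x)))).
  rewrite mu_Tin', !m_Tin'. apply m_sig.
Defined.

Lemma mT_rep : is_rep_mor Trep s mT.
Proof. intros o A x. apply m_tau. Qed.

Lemma mT_uniq (m' : MonadMor Tm Sm) : is_rep_mor Trep s m' -> forall A x, m' A x = mT A x.
Proof.
  intros Hm.
  assert (K : forall n A x, m' A (Tin n x) = mn n A x).
  { induction n; intros A x; [destruct x|].
    destruct x as [b|[o y]].
    - rewrite Tin_inl. exact (mm_eta _ _ m' A b).
    - rewrite <- tau_beta.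
      change (m' A (rep Trep o A (Hmap (Sig o) (cT n) A y)) = rep s o A (Hmap (Sig o) (mn n) A y)).
      rewrite Hm. f_equal. apply Hmap_comp_ext. intros B z. apply IHn. }
  intros A x. destruct (Tin_surj _ x) as [n [z <-]].
  rewrite K. symmetry. apply m_Tin'.
Qed.
End Init.

Lemma representable_main : representable Sig.
Proof.
  exists Tm, Trep. intros Sm s. exists (mT Sm s). split.
  - apply mT_rep.
  - apply mT_uniq.
Qed.
End Main.

Theorem theorem4 : forall (O : Type) (Sig : O -> StrArity), representable Sig.
Proof. intros O Sig. apply representable_main. Qed.
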